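(* Let $v$ be an integrable function on $[0,\infty)$ and suppose there exist two integrable functions $z_1,z_2$ on $[0,\infty)$ such that $$z_1(x)\le v(x)\le z_2(x)\quad\text{for all } x\in[0,\infty).$$ Then for all $x>0$, $\alpha>0$, $\rho>0$, $\delta>0$ and $\beta,\eta,k,\lambda\in\mathbb{R}$, $$ {}^{\rho}\mathcal{J}^{\alpha,\beta}_{\eta,k}z_2(x)\,{}^{\rho}\mathcal{J}^{\delta,\lambda}_{\eta,k}v(x)+{}^{\rho}\mathcal{J}^{\alpha,\beta}_{\eta,k}v(x)\,{}^{\rho}\mathcal{J}^{\delta,\lambda}_{\eta,k}z_1(x)\ \ge\ {}^{\rho}\mathcal{J}^{\alpha,\beta}_{\eta,k}v(x)\,{}^{\rho}\mathcal{J}^{\delta,\lambda}_{\eta,k}v(x)+{}^{\rho}\mathcal{J}^{\alpha,\beta}_{\eta,k}z_2(x)\,{}^{\rho}\mathcal{J}^{\delta,\lambda}_{\eta,k}z_1(x).$$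
   Context: For a function $f$ on $[0,\infty)$, $x>0$, $\alpha>0$, $\rho>0$ and $\beta,\eta,k\in\mathbb{R}$, the generalized Katugampola fractional integral is $${}^{\rho}\mathcal{J}^{\alpha,\beta}_{\eta,k}f(x)=\frac{\rho^{1-\beta}x^{k}}{\Gamma(\alpha)}\int_0^x\frac{\tau^{\rho(\eta+1)-1}}{(x^\rho-\tau^\rho)^{1-\alpha}}f(\tau)\,d\tau,$$ defined whenever the integral exists; all such integrals appearing in the statement are assumed to exist. *)

(* Defs.v *)
From mathcomp Require Import all_boot all_order all_algebra.
From mathcomp Require Import all_classical all_reals all_analysis.
Set Implicit Arguments. Unset Strict Implicit. Unset Printing Implicit Defensive.
Import Order.TTheory GRing.Theory Num.Theory.
Local Open Scope classical_set_scope.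
Local Open Scope ring_scope.

Definition Gamma (R : realType) (a : R) : R :=
  Rintegral (@lebesgue_measure R) `]0%R, +oo[
    (fun t => powR t (a - 1) * expR (- t)).

Definition katu_kernel (R : realType) (alpha rho eta x : R) (f : R -> R) : R -> R :=
  fun tau => powR tau (rho * (eta + 1) - 1) / powR (powR x rho - powR tau rho) (1 - alpha) * f tau.

Definition katugampola (R : realType) (rho alpha beta eta k : R) (f : R -> R) (x : R) : R :=
  powR rho (1 - beta) * powR x k / Gamma alpha *
  Rintegral (@lebesgue_measure R) `]0%R, x[ (katu_kernel alpha rho eta x f).

(* Main.v *)
Require Import Defs.
From mathcomp Require Import all_boot all_order all_algebra.
From mathcomp Require Import all_classical all_reals all_analysis.
From mathcomp Require Import ring.
Import Order.TTheory GRing.Theory Num.Theory.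
Local Open Scope classical_set_scope.
Local Open Scope ring_scope.

Theorem theorem1 (R : realType) (v z1 z2 : R -> R)
  (hv : (@lebesgue_measure R).-integrable `[0%R, +oo[ (fun t => (v t)%:E))
  (hz1 : (@lebesgue_measure R).-integrable `[0%R, +oo[ (fun t => (z1 t)%:E))
  (hz2 : (@lebesgue_measure R).-integrable `[0%R, +oo[ (fun t => (z2 t)%:E))
  (hle1 : forall t : R, 0 <= t -> z1 t <= v t)
  (hle2 : forall t : R, 0 <= t -> v t <= z2 t)
  (x alpha rho delta beta eta k lambda : R)
  (hx : 0 < x) (halpha : 0 < alpha) (hrho : 0 < rho) (hdelta : 0 < delta)
  (* existence of all the fractional integrals appearing in the statement *)
  (iav : (@lebesgue_measure R).-integrable `]0%R, x[
           (fun t => (katu_kernel alpha rho eta x v t)%:E))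
  (iaz1 : (@lebesgue_measure R).-integrable `]0%R, x[
           (fun t => (katu_kernel alpha rho eta x z1 t)%:E))
  (iaz2 : (@lebesgue_measure R).-integrable `]0%R, x[
           (fun t => (katu_kernel alpha rho eta x z2 t)%:E))
  (idv : (@lebesgue_measure R).-integrable `]0%R, x[
           (fun t => (katu_kernel delta rho eta x v t)%:E))
  (idz1 : (@lebesgue_measure R).-integrable `]0%R, x[
           (fun t => (katu_kernel delta rho eta x z1 t)%:E))
  (idz2 : (@lebesgue_measure R).-integrable `]0%R, x[
           (fun t => (katu_kernel delta rho eta x z2 t)%:E)) :
  katugampola rho alpha beta eta k z2 x * katugampola rho delta lambda eta k v x
  + katugampola rho alpha beta eta k v x * katugampola rho delta lambda eta k z1 x
  >= katugampola rho alpha beta eta k v x * katugampola rho delta lambda eta k v x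
  + katugampola rho alpha beta eta k z2 x * katugampola rho delta lambda eta k z1 x.
Proof.
have Gge0 : forall a : R, 0 <= Gamma a.
  by move=> a; rewrite /Gamma; apply: Rintegral_ge0 => t _; rewrite mulr_ge0 ?powR_ge0 ?expR_ge0.
have cge0 : forall a b : R, 0 <= powR rho (1 - b) * powR x k / Gamma a.
  by move=> a b; rewrite mulr_ge0 ?mulr_ge0 ?invr_ge0 ?powR_ge0.
have kle : forall a (f g : R -> R), (forall t, 0 <= t -> f t <= g t) ->
   (@lebesgue_measure R).-integrable `]0%R, x[ (fun t => (katu_kernel a rho eta x f t)%:E) ->
   (@lebesgue_measure R).-integrable `]0%R, x[ (fun t => (katu_kernel a rho eta x g t)%:E) ->
   Rintegral (@lebesgue_measure R) `]0%R, x[ (katu_kernel a rho eta x f) <=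
   Rintegral (@lebesgue_measure R) `]0%R, x[ (katu_kernel a rho eta x g).
  move=> a f g fg If Ig; apply: le_Rintegral => //.
  move=> t; rewrite /= in_itv /= => /andP[t0 _].
  rewrite /katu_kernel; apply: ler_wpM2l.
    by rewrite mulr_ge0 ?invr_ge0 ?powR_ge0.
  by apply: fg; rewrite ltW.
have h1 := kle alpha _ _ hle2 iav iaz2.
have h2 := kle delta _ _ hle1 idz1 idv.
rewrite /katugampola.
have key : forall ca cd A2 Av Bv B1 : R, 0 <= ca -> 0 <= cd -> Av <= A2 -> B1 <= Bv ->
  ca * Av * (cd * Bv) + ca * A2 * (cd * B1) <= ca * A2 * (cd * Bv) + ca * Av * (cd * B1).
  move=> ca cd A2 Av Bv B1 hca hcd hA hB; rewrite -subr_ge0.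
  have -> : ca * A2 * (cd * Bv) + ca * Av * (cd * B1) - (ca * Av * (cd * Bv) + ca * A2 * (cd * B1))
    = (ca * cd) * ((A2 - Av) * (Bv - B1)) by ring.
  by rewrite mulr_ge0 ?mulr_ge0 ?subr_ge0.
by apply: key => //; apply: cge0.
Qed.
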